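(* Let $X$ be a metric space, $(M,\rho)$ a complete metric space, and $(G_i)_{i\ge1}$ a sequence of homotopically dense $G_\delta$-subsets of $C(X,M)$. Then $\bigcap_{i\ge1}G_i$ is homotopically dense in $C(X,M)$.
   Context: $C(X,M)$ carries the source limitation topology: the neighborhood base at $f$ consists of the sets $\{g:\rho(g(x),f(x))<\varepsilon(x)\ \forall x\in X\}$, $\varepsilon\colon X\to(0,1]$ continuous. A set $U\subset C(X,M)$ is homotopically dense if for every $g\in C(X,M)$ and every continuous $\varepsilon\colon X\to(0,1]$ there is $g'\in U$ which is $\varepsilon$-homotopic to $g$, meaning there is a homotopy $h\colon X\times[0,1]\to M$ from $g$ to $g'$ with $\operatorname{diam}h(\{x\}\times[0,1])<\varepsilon(x)$ for all $x\in X$. *)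

(* Defs.v *)
From Stdlib Require Import Reals.
Open Scope R_scope.

Record MetricSpace := {
  carrier :> Type;
  dist : carrier -> carrier -> R;
  dist_nonneg : forall x y, 0 <= dist x y;
  dist_eq0 : forall x y, dist x y = 0 <-> x = y;
  dist_sym : forall x y, dist x y = dist y x;
  dist_tri : forall x y z, dist x z <= dist x y + dist y z
}.
Arguments dist {m} _ _.

Definition complete (M : MetricSpace) : Prop :=
  forall u : nat -> M,
    (forall e, 0 < e -> exists N, forall n m, (N <= n)%nat -> (N <= m)%nat ->
        dist (u n) (u m) < e) ->
    exists l : M, forall e, 0 < e -> exists N, forall n, (N <= n)%nat ->
        dist (u n) l < e.

Definition continuous {X Y : MetricSpace} (f : X -> Y) : Prop :=
  forall x e, 0 < e -> exists d, 0 < d /\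
    forall y, dist x y < d -> dist (f x) (f y) < e.

Definition continuous_R {X : MetricSpace} (f : X -> R) : Prop :=
  forall x e, 0 < e -> exists d, 0 < d /\
    forall y, dist x y < d -> Rabs (f x - f y) < e.

Definition eps_fun {X : MetricSpace} (eps : X -> R) : Prop :=
  continuous_R eps /\ forall x, 0 < eps x <= 1.

(* Subsets of C(X,M) are represented as predicates on X -> M; only their
   values on continuous maps matter. *)
Definition subset_CXM (X M : MetricSpace) := (X -> M) -> Prop.

(* Open in the source limitation topology on C(X,M). *)
Definition sl_open {X M : MetricSpace} (U : subset_CXM X M) : Prop :=
  forall f, continuous f -> U f ->
    exists eps, eps_fun eps /\
      forall g, continuous g -> (forall x, dist (g x) (f x) < eps x) -> U g.

Definition sl_Gdelta {X M : MetricSpace} (U : subset_CXM X M) : Prop :=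
  exists O : nat -> subset_CXM X M,
    (forall n, sl_open (O n)) /\
    forall f, continuous f -> (U f <-> forall n, O n f).

(* Continuity of a homotopy h : X x [0,1] -> M (X x [0,1] with the product
   topology; h is given curried, only its values on [0,1] matter). *)
Definition homotopy_continuous {X M : MetricSpace} (h : X -> R -> M) : Prop :=
  forall x t, 0 <= t <= 1 -> forall e, 0 < e -> exists d, 0 < d /\
    forall y s, 0 <= s <= 1 -> dist x y < d -> Rabs (t - s) < d ->
      dist (h x t) (h y s) < e.

(* diam h({x} x [0,1]) < r, i.e. the supremum of the distances is < r,
   i.e. some bound strictly below r bounds all distances. *)
Definition diam_fiber_lt {X M : MetricSpace} (h : X -> R -> M) (x : X) (r : R)
  : Prop :=
  exists b, b < r /\ forall t s, 0 <= t <= 1 -> 0 <= s <= 1 ->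
    dist (h x t) (h x s) <= b.

Definition eps_homotopic {X M : MetricSpace} (eps : X -> R) (g g' : X -> M)
  : Prop :=
  exists h : X -> R -> M,
    homotopy_continuous h /\
    (forall x, h x 0 = g x) /\ (forall x, h x 1 = g' x) /\
    forall x, diam_fiber_lt h x (eps x).

Definition homotopically_dense {X M : MetricSpace} (U : subset_CXM X M) : Prop :=
  forall g : X -> M, continuous g ->
    forall eps, eps_fun eps ->
      exists g', continuous g' /\ U g' /\ eps_homotopic eps g g'.

(* Main.v *)
Require Import Defs.
From Stdlib Require Import Reals Lra Lia ClassicalEpsilon Cantor.
Require Import Defs.
Open Scope R_scope.

Definition clamp (u : R) : R := Rmax 0 (Rmin 1 u).

Lemma clamp_in (u : R) : 0 <= clamp u <= 1.
Proof. unfold clamp, Rmax, Rmin; repeat destruct Rle_dec; lra. Qed.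

Lemma clamp_lip (u v : R) : Rabs (clamp u - clamp v) <= Rabs (u - v).
Proof. unfold clamp, Rmax, Rmin, Rabs; repeat destruct Rle_dec; repeat destruct Rcase_abs; lra. Qed.

Lemma clamp_ge1 (u : R) : 1 <= u -> clamp u = 1.
Proof. unfold clamp, Rmax, Rmin; repeat destruct Rle_dec; lra. Qed.

Lemma clamp_0 : clamp 0 = 0.
Proof. unfold clamp, Rmax, Rmin; repeat destruct Rle_dec; lra. Qed.

Lemma Rmin_lip (a b c d : R) : Rabs (Rmin a b - Rmin c d) <= Rmax (Rabs (a - c)) (Rabs (b - d)).
Proof. unfold Rmin, Rmax, Rabs; repeat destruct Rle_dec; repeat destruct Rcase_abs; lra. Qed.

Lemma le_eps (a b : R) : (forall e, 0 < e -> a < b + e) -> a <= b.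
Proof. intros H. destruct (Rle_lt_dec a b); auto. specialize (H (a - b)); lra. Qed.

Lemma dist_self {M : MetricSpace} (x : M) : dist x x = 0.
Proof. apply dist_eq0; reflexivity. Qed.

Lemma glue_cont {X M : MetricSpace} (A B : X -> R -> M) (a : R) :
  homotopy_continuous A -> homotopy_continuous B -> (forall x, A x a = B x a) ->
  homotopy_continuous (fun x t => if Rle_dec t a then A x t else B x t).
Proof.
  intros HA HB Hab x t Ht e He.
  destruct (Rtotal_order t a) as [lt|[eq|gt]].
  - destruct (HA x t Ht e He) as [d [Hd Hd']].
    exists (Rmin d (a - t)); split. { apply Rmin_pos; lra. }
    intros y s Hs Hxy Hts.
    assert (Hm1 := Rmin_l d (a - t)); assert (Hm2 := Rmin_r d (a - t)).
    destruct (Rle_dec t a); [|lra].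
    destruct (Rle_dec s a).
    + apply Hd'; auto; lra.
    + exfalso. unfold Rabs in Hts; destruct Rcase_abs in Hts; lra.
  - subst t. destruct (HA x a Ht e He) as [d1 [Hd1 Hd1']].
    destruct (HB x a Ht e He) as [d2 [Hd2 Hd2']].
    exists (Rmin d1 d2); split. { apply Rmin_pos; lra. }
    intros y s Hs Hxy Hts.
    assert (Hm1 := Rmin_l d1 d2); assert (Hm2 := Rmin_r d1 d2).
    destruct (Rle_dec a a); [|lra].
    destruct (Rle_dec s a).
    + apply Hd1'; auto; lra.
    + rewrite Hab. apply Hd2'; auto; lra.
  - destruct (HB x t Ht e He) as [d [Hd Hd']].
    exists (Rmin d (t - a)); split. { apply Rmin_pos; lra. }
    intros y s Hs Hxy Hts.
    assert (Hm1 := Rmin_l d (t - a)); assert (Hm2 := Rmin_r d (t - a)).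
    destruct (Rle_dec t a); [lra|].
    destruct (Rle_dec s a).
    + exfalso. unfold Rabs in Hts; destruct Rcase_abs in Hts; lra.
    + apply Hd'; auto; lra.
Qed.

Lemma reparam_cont {X M : MetricSpace} (h : X -> R -> M) (a c : R) :
  homotopy_continuous h -> 0 < c ->
  homotopy_continuous (fun x t => h x (clamp ((t - a) * c))).
Proof.
  intros Hh Hc x t Ht e He.
  destruct (Hh x (clamp ((t - a) * c)) (clamp_in _) e He) as [d [Hd Hd']].
  assert (Hdc : 0 < d / c) by (apply Rdiv_lt_0_compat; lra).
  exists (Rmin d (d / c)); split. { apply Rmin_pos; lra. }
  intros y s Hs Hxy Hts.
  assert (Hm1 := Rmin_l d (d/c)); assert (Hm2 := Rmin_r d (d/c)).
  apply Hd'; auto. apply clamp_in. lra.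
  eapply Rle_lt_trans; [apply clamp_lip|].
    replace ((t - a) * c - (s - a) * c) with ((t - s) * c) by ring.
    rewrite Rabs_mult, (Rabs_right c) by lra.
    assert (Hts' : Rabs (t - s) < d / c) by lra. apply (Rmult_lt_compat_r c) in Hts'; auto.
    replace (d / c * c) with d in Hts' by (field; lra). lra.
Qed.

Definition tau (n : nat) : R := 1 - / 2 ^ n.

Lemma pow2_pos n : 0 < 2 ^ n.
Proof. apply pow_lt; lra. Qed.

Lemma tau_bounds n : 0 <= tau n < 1.
Proof.
  unfold tau. assert (H := pow2_pos n). assert (1 <= 2 ^ n).
  { replace 1 with (2 ^ 0) by reflexivity. apply Rle_pow; [lra|lia]. }
  split. { assert (/ 2 ^ n <= / 1) by (apply Rinv_le_contravar; lra). rewrite Rinv_1 in H1. lra. }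
  assert (0 < / 2 ^ n) by (apply Rinv_0_lt_compat; lra). lra.
Qed.

Lemma tau_S n : tau (S n) - tau n = / 2 ^ (S n).
Proof. unfold tau. assert (H := pow2_pos n). simpl. field. lra. Qed.

Lemma tau_mono n m : (n <= m)%nat -> tau n <= tau m.
Proof.
  intros H. unfold tau. assert (2 ^ n <= 2 ^ m) by (apply Rle_pow; [lra|lia]).
  assert (/ 2 ^ m <= / 2 ^ n) by (apply Rinv_le_contravar; [apply pow2_pos|lra]). lra.
Qed.

Lemma tau_lt_S n : tau n < tau (S n).
Proof. assert (H := tau_S n). assert (0 < / 2 ^ S n) by (apply Rinv_0_lt_compat, pow2_pos). lra. Qed.

Lemma small_pow (e : R) : 0 < e -> exists N, forall n, (N <= n)%nat -> / 2 ^ n < e.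
Proof.
  intros He. destruct (pow_lt_1_zero (/ 2) ltac:(rewrite Rabs_right; lra) e He) as [N HN].
  exists N. intros n Hn. specialize (HN n Hn). rewrite pow_inv in HN.
  rewrite Rabs_right in HN; auto. left. apply Rinv_0_lt_compat, pow2_pos.
Qed.

Fixpoint Hs {X M : MetricSpace} (h : nat -> X -> R -> M) (n : nat) : X -> R -> M :=
  match n with
  | O => fun x t => h O x 0
  | S k => fun x t => if Rle_dec t (tau k) then Hs h k x t
                      else h k x (clamp ((t - tau k) * 2 ^ (S k)))
  end.

Lemma Hs_tail {X M : MetricSpace} (h : nat -> X -> R -> M)
  (hj : forall k x, h k x 1 = h (S k) x 0) :
  forall n x t, tau n <= t -> Hs h n x t = h n x 0.
Proof.
  induction n; intros x t Ht; cbn [Hs]; auto.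
  assert (H1 := tau_lt_S n).
  destruct (Rle_dec t (tau n)); [lra|].
  rewrite clamp_ge1. apply hj.
  rewrite <- (Rinv_l (2 ^ S n)) by (apply Rgt_not_eq, pow2_pos).
  rewrite <- tau_S. apply Rmult_le_compat_r. left; apply pow2_pos. lra.
Qed.

Lemma Hs_prefix {X M : MetricSpace} (h : nat -> X -> R -> M) :
  forall n m x t, (n <= m)%nat -> t <= tau n -> Hs h m x t = Hs h n x t.
Proof.
  intros n m x t Hnm Ht. induction Hnm; auto.
  cbn [Hs]. destruct (Rle_dec t (tau m)); auto.
  exfalso. assert (tau n <= tau m) by (apply tau_mono; auto). lra.
Qed.

Lemma Hs_cont {X M : MetricSpace} (h : nat -> X -> R -> M)
  (hc : forall k, homotopy_continuous (h k))
  (hj : forall k x, h k x 1 = h (S k) x 0) :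
  forall n, homotopy_continuous (Hs h n).
Proof.
  induction n.
  - cbn [Hs]. intros x t Ht e He.
    destruct (hc O x 0 ltac:(lra) e He) as [d [Hd Hd']].
    exists d; split; auto. intros y s Hs' Hxy Hts. apply Hd'; auto; try lra.
    rewrite Rminus_0_r, Rabs_R0; auto.
  - cbn [Hs]. apply glue_cont; auto.
    + apply reparam_cont; auto. apply pow2_pos.
    + intros x. rewrite Hs_tail; auto; [|lra].
      rewrite Rminus_diag, Rmult_0_l, clamp_0. reflexivity.
Qed.

Lemma e_mono {X : MetricSpace} (e : nat -> X -> R)
  (hepos : forall k x, 0 <= e k x) (hes : forall k x, e (S k) x <= e k x / 2) :
  forall n m x, (n <= m)%nat -> e m x <= e n x.
Proof.
  intros n m x H. induction H. lra. specialize (hes m x); specialize (hepos m x). lra.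
Qed.

Lemma e_pow {X : MetricSpace} (e : nat -> X -> R)
  (he0 : forall x, e O x <= 1) (hes : forall k x, e (S k) x <= e k x / 2) :
  forall n x, e n x <= / 2 ^ n.
Proof.
  induction n; intros x; simpl. rewrite Rinv_1; auto.
  specialize (hes n x); specialize (IHn x).
  rewrite Rinv_mult. assert (H := pow2_pos n). lra.
Qed.

Lemma Hs_bound {X M : MetricSpace} (h : nat -> X -> R -> M) (e : nat -> X -> R)
  (hj : forall k x, h k x 1 = h (S k) x 0)
  (hb : forall k x t s, 0 <= t <= 1 -> 0 <= s <= 1 -> dist (h k x t) (h k x s) <= e k x)
  (hepos : forall k x, 0 <= e k x) (hes : forall k x, e (S k) x <= e k x / 2) :
  forall n m x t, (n <= m)%nat -> tau n <= t <= 1 ->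
    dist (Hs h m x t) (h n x 0) <= 2 * e n x - 2 * e m x.
Proof.
  intros n m x t Hnm. revert t. induction Hnm; intros t Ht.
  - rewrite Hs_tail by (auto; lra). rewrite dist_self. lra.
  - cbn [Hs]. assert (Hem := hes m x). assert (Hp := hepos (S m) x).
    destruct (Rle_dec t (tau m)). specialize (IHHnm t Ht). lra.
    assert (Hm1 := IHHnm 1 ltac:(lra)).
    rewrite Hs_tail in Hm1 by (auto; assert (H := tau_bounds m); lra).
    eapply Rle_trans; [apply (dist_tri _ _ (h m x 0))|].
    assert (dist (h m x (clamp ((t - tau m) * 2 ^ S m))) (h m x 0) <= e m x).
    { apply hb. apply clamp_in. lra. }
    lra.
Qed.

Lemma Hs_cauchy {X M : MetricSpace} (h : nat -> X -> R -> M) (e : nat -> X -> R)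
  (hj : forall k x, h k x 1 = h (S k) x 0)
  (hb : forall k x t s, 0 <= t <= 1 -> 0 <= s <= 1 -> dist (h k x t) (h k x s) <= e k x)
  (hepos : forall k x, 0 <= e k x) (hes : forall k x, e (S k) x <= e k x / 2) :
  forall n m x t, (n <= m)%nat -> 0 <= t <= 1 ->
    dist (Hs h m x t) (Hs h n x t) <= 2 * e n x.
Proof.
  intros n m x t Hnm Ht.
  destruct (Rle_dec t (tau n)).
  - rewrite (Hs_prefix h n m) by auto. rewrite dist_self. specialize (hepos n x); lra.
  - rewrite (Hs_tail h hj n) by lra.
    assert (H := Hs_bound h e hj hb hepos hes n m x t Hnm ltac:(lra)).
    specialize (hepos m x). lra.
Qed.

Theorem telescope {X M : MetricSpace} (HM : complete M)
  (h : nat -> X -> R -> M) (e : nat -> X -> R)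
  (hc : forall k, homotopy_continuous (h k))
  (hj : forall k x, h k x 1 = h (S k) x 0)
  (hb : forall k x t s, 0 <= t <= 1 -> 0 <= s <= 1 -> dist (h k x t) (h k x s) <= e k x)
  (hepos : forall k x, 0 <= e k x) (hes : forall k x, e (S k) x <= e k x / 2)
  (he0 : forall x, e O x <= 1) :
  exists H : X -> R -> M,
    homotopy_continuous H /\ (forall x, H x 0 = h O x 0) /\
    (forall x t, 0 <= t <= 1 -> dist (H x t) (h O x 0) <= 2 * e O x) /\
    (forall n x, dist (H x 1) (h n x 0) <= 2 * e n x).
Proof.
  pose (P := fun x t (l : M) => forall ep, 0 < ep -> exists N, forall n, (N <= n)%nat ->
            dist (Hs h n x t) l < ep).
  pose (L := fun x t => epsilon (inhabits (h O x 0)) (P x t)).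
  assert (HL : forall x t, 0 <= t <= 1 -> P x t (L x t)).
  { intros x t Ht. apply epsilon_spec. apply HM.
    intros ep Hep. destruct (small_pow (ep / 4) ltac:(lra)) as [N HN].
    exists N. intros n m Hn Hm.
    assert (H1 := Hs_cauchy h e hj hb hepos hes N n x t Hn Ht).
    assert (H2 := Hs_cauchy h e hj hb hepos hes N m x t Hm Ht).
    assert (H3 := e_pow e he0 hes N x). specialize (HN N (le_n _)).
    eapply Rle_lt_trans; [apply (dist_tri _ _ (Hs h N x t))|].
    rewrite (dist_sym _ (Hs h N x t)). lra. }
  assert (HB : forall n x t, 0 <= t <= 1 -> dist (Hs h n x t) (L x t) <= 2 * e n x).
  { intros n x t Ht. apply le_eps. intros ep Hep.
    destruct (HL x t Ht ep Hep) as [N HN].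
    assert (H1 := Hs_cauchy h e hj hb hepos hes n (Nat.max n N) x t (Nat.le_max_l _ _) Ht).
    assert (H2 := HN (Nat.max n N) (Nat.le_max_r _ _)).
    eapply Rle_lt_trans; [apply (dist_tri _ _ (Hs h (Nat.max n N) x t))|].
    rewrite (dist_sym _ (Hs h n x t) (Hs h (Nat.max n N) x t)). lra. }
  exists L. split; [|split; [|split]].
  - intros x t Ht ep Hep.
    destruct (small_pow (ep / 6) ltac:(lra)) as [n Hn]. specialize (Hn n (le_n _)).
    destruct (Hs_cont h hc hj n x t Ht (ep / 3) ltac:(lra)) as [d [Hd Hd']].
    exists d; split; auto. intros y s Hs' Hxy Hts.
    assert (H1 := HB n x t Ht). assert (H2 := HB n y s Hs').
    assert (H3 := Hd' y s Hs' Hxy Hts).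
    assert (H4 := e_pow e he0 hes n x). assert (H5 := e_pow e he0 hes n y).
    eapply Rle_lt_trans; [apply (dist_tri _ _ (Hs h n x t))|].
    eapply Rle_lt_trans; [apply Rplus_le_compat_l, (dist_tri _ _ (Hs h n y s))|].
    rewrite (dist_sym _ (L x t)). lra.
  - intros x. apply dist_eq0. apply Rle_antisym; [|apply dist_nonneg].
    apply le_eps. intros ep Hep.
    destruct (small_pow (ep / 2) ltac:(lra)) as [n Hn]. specialize (Hn n (le_n _)).
    assert (H1 := HB n x 0 ltac:(lra)).
    assert (Hs h n x 0 = h O x 0).
    { rewrite (Hs_prefix h O n) by (auto with arith; unfold tau; simpl; lra). reflexivity. }
    rewrite H in H1. rewrite dist_sym. assert (H4 := e_pow e he0 hes n x). lra.
  - intros x t Ht. rewrite dist_sym. apply (HB O x t Ht).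
  - intros n x. rewrite dist_sym. rewrite <- (Hs_tail h hj n x 1).
    apply HB; lra. assert (H := tau_bounds n); lra.
Qed.

Definition stepQ {X M : MetricSpace} (Ofam : nat -> nat -> subset_CXM X M) (k : nat)
  (gk : X -> M) (ek : X -> R) (tr : (X -> R -> M) * (X -> M) * (X -> R)) : Prop :=
  homotopy_continuous (fst (fst tr)) /\
  (forall x, fst (fst tr) x 0 = gk x) /\
  (forall x, fst (fst tr) x 1 = snd (fst tr) x) /\
  (forall x t s, 0 <= t <= 1 -> 0 <= s <= 1 ->
     dist (fst (fst tr) x t) (fst (fst tr) x s) <= ek x) /\
  continuous (snd (fst tr)) /\ eps_fun (snd tr) /\
  (forall x, snd tr x <= ek x / 2) /\
  (forall f, continuous f -> (forall x, dist (f x) (snd (fst tr) x) < 4 * snd tr x) ->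
     Ofam (fst (of_nat k)) (snd (of_nat k)) f).

Definition step {X M : MetricSpace} (Ofam : nat -> nat -> subset_CXM X M)
  (g : X -> M) (eps : X -> R) (k : nat) (gk : X -> M) (ek : X -> R) :=
  epsilon (inhabits ((fun x (_ : R) => g x), g, eps)) (stepQ Ofam k gk ek).

Fixpoint seqs {X M : MetricSpace} (Ofam : nat -> nat -> subset_CXM X M)
  (g : X -> M) (eps : X -> R) (k : nat) : (X -> M) * (X -> R) :=
  match k with
  | O => (g, fun x => eps x / 8)
  | S k => let p := seqs Ofam g eps k in
           let tr := step Ofam g eps k (fst p) (snd p) in
           (snd (fst tr), snd tr)
  end.

Lemma eps_fun_min {X : MetricSpace} (a b : X -> R) :
  eps_fun a -> eps_fun b -> eps_fun (fun x => Rmin (a x / 2) (b x / 4)).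
Proof.
  intros [Ca Pa] [Cb Pb]. split.
  - intros x e He. destruct (Ca x e He) as [d1 [Hd1 Hd1']].
    destruct (Cb x e He) as [d2 [Hd2 Hd2']].
    exists (Rmin d1 d2). split. apply Rmin_pos; lra.
    intros y Hxy. assert (Hm1 := Rmin_l d1 d2); assert (Hm2 := Rmin_r d1 d2).
    eapply Rle_lt_trans; [apply Rmin_lip|].
    assert (H1 := Hd1' y ltac:(lra)). assert (H2 := Hd2' y ltac:(lra)).
    replace (a x / 2 - a y / 2) with ((a x - a y) / 2) by field.
    replace (b x / 4 - b y / 4) with ((b x - b y) / 4) by field.
    unfold Rdiv. rewrite !Rabs_mult. rewrite !(Rabs_right (/ _)) by lra.
    unfold Rmax; destruct Rle_dec; lra.
  - intros x. specialize (Pa x); specialize (Pb x).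
    unfold Rmin; destruct Rle_dec; lra.
Qed.

Lemma step_exists {X M : MetricSpace} (G : nat -> subset_CXM X M)
  (Ofam : nat -> nat -> subset_CXM X M)
  (HO : forall i, (forall n, sl_open (Ofam i n)) /\
          forall f, continuous f -> (G i f <-> forall n, Ofam i n f))
  (HGh : forall i, homotopically_dense (G i)) k gk ek :
  continuous gk -> eps_fun ek -> exists tr, stepQ Ofam k gk ek tr.
Proof.
  intros Hg He. set (i := fst (of_nat k)). set (n := snd (of_nat k)).
  destruct (HGh i gk Hg ek He) as [g' [Hg' [HG' [hh [hc [h0 [h1 hd]]]]]]].
  destruct (HO i) as [Hop Hch].
  assert (HOg : Ofam i n g') by (apply (proj1 (Hch g' Hg')); auto).
  destruct (Hop n g' Hg' HOg) as [del [Hdel Hdel']].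
  exists (hh, g', fun x => Rmin (ek x / 2) (del x / 4)).
  unfold stepQ; simpl. split; [auto|split; [auto|split; [auto|split; [|split; [auto|split; [|split]]]]]].
  - intros x t s Ht Hs. destruct (hd x) as [b [Hb Hb']]. specialize (Hb' t s Ht Hs). lra.
  - apply eps_fun_min; auto.
  - intros x. apply Rmin_l.
  - intros f Hf Hd. apply Hdel'; auto. intros x. specialize (Hd x).
    assert (Hm := Rmin_r (ek x / 2) (del x / 4)). lra.
Qed.

Theorem corollary2p6 (X M : MetricSpace) (HM : complete M)
  (G : nat -> subset_CXM X M)
  (HGsub : forall i f, G i f -> continuous f)
  (HGd : forall i, sl_Gdelta (G i))
  (HGh : forall i, homotopically_dense (G i)) :
  homotopically_dense (fun f => forall i, G i f).
Proof.
  intros g Hg eps Heps.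
  pose (Ofam := fun i => epsilon (inhabits (fun (_ : nat) (_ : X -> M) => True))
     (fun O : nat -> subset_CXM X M => (forall n, sl_open (O n)) /\
          forall f, continuous f -> (G i f <-> forall n, O n f))).
  assert (HO : forall i, (forall n, sl_open (Ofam i n)) /\
          forall f, continuous f -> (G i f <-> forall n, Ofam i n f)).
  { intros i. unfold Ofam. apply epsilon_spec. apply HGd. }
  assert (Inv : forall k, continuous (fst (seqs Ofam g eps k)) /\ eps_fun (snd (seqs Ofam g eps k))).
  { induction k.
    - simpl. split; auto. destruct Heps as [Ce Pe]. split.
      + intros x e He. destruct (Ce x e He) as [d [Hd Hd']]. exists d; split; auto.
        intros y Hy. specialize (Hd' y Hy).
        replace (eps x / 8 - eps y / 8) with ((eps x - eps y) * / 8) by field.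
        rewrite Rabs_mult, (Rabs_right (/ 8)) by lra. lra.
      + intros x. specialize (Pe x). lra.
    - destruct IHk as [H1 H2].
      assert (HQ : stepQ Ofam k (fst (seqs Ofam g eps k)) (snd (seqs Ofam g eps k))
         (step Ofam g eps k (fst (seqs Ofam g eps k)) (snd (seqs Ofam g eps k)))).
      { unfold step. apply epsilon_spec. apply (step_exists G Ofam HO HGh k _ _ H1 H2). }
      destruct HQ as [_ [_ [_ [_ [Hc [He _]]]]]]. simpl. auto. }
  assert (Q : forall k, stepQ Ofam k (fst (seqs Ofam g eps k)) (snd (seqs Ofam g eps k))
      (step Ofam g eps k (fst (seqs Ofam g eps k)) (snd (seqs Ofam g eps k)))).
  { intros k. destruct (Inv k) as [H1 H2]. unfold step. apply epsilon_spec.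
    apply (step_exists G Ofam HO HGh k _ _ H1 H2). }
  pose (hf := fun k => fst (fst (step Ofam g eps k (fst (seqs Ofam g eps k)) (snd (seqs Ofam g eps k))))).
  pose (ef := fun k => snd (seqs Ofam g eps k)).
  assert (hc : forall k, homotopy_continuous (hf k)) by (intros k; apply (Q k)).
  assert (hj : forall k x, hf k x 1 = hf (S k) x 0).
  { intros k x. unfold hf. destruct (Q (S k)) as [_ [E0 _]]. rewrite E0.
    destruct (Q k) as [_ [_ [E1 _]]]. rewrite E1. reflexivity. }
  assert (hb : forall k x t s, 0 <= t <= 1 -> 0 <= s <= 1 -> dist (hf k x t) (hf k x s) <= ef k x).
  { intros k. apply (Q k). }
  assert (hepos : forall k x, 0 <= ef k x).
  { intros k x. destruct (Inv k) as [_ [_ P]]. specialize (P x). unfold ef. lra. }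
  assert (hes : forall k x, ef (S k) x <= ef k x / 2).
  { intros k x. unfold ef. apply (Q k). }
  assert (he0 : forall x, ef O x <= 1).
  { intros x. unfold ef. simpl. destruct Heps as [_ P]. specialize (P x). lra. }
  destruct (telescope HM hf ef hc hj hb hepos hes he0) as [H [HHc [HH0 [HHb HH1]]]].
  assert (Hg' : continuous (fun x => H x 1)).
  { intros x e He. destruct (HHc x 1 ltac:(lra) e He) as [d [Hd Hd']].
    exists d; split; auto. intros y Hy. apply Hd'; auto. lra.
    rewrite Rminus_diag, Rabs_R0. auto. }
  assert (Hh0 : forall x, hf O x 0 = g x).
  { intros x. unfold hf. destruct (Q O) as [_ [E0 _]]. rewrite E0. reflexivity. }
  exists (fun x => H x 1). split; [auto|split].
  - intros i. destruct (HO i) as [_ Hch]. apply (proj2 (Hch _ Hg')).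
    intros n. set (k := to_nat (i, n)).
    destruct (Q k) as [_ [_ [_ [_ [_ [_ [_ Hop]]]]]]].
    assert (Ek : of_nat k = (i, n)) by (unfold k; apply cancel_of_to). clearbody k. rewrite Ek in Hop. cbn [fst snd] in Hop. apply Hop; auto.
    intros x. specialize (HH1 (S k) x).
    assert (E : hf (S k) x 0 = snd (fst (step Ofam g eps k (fst (seqs Ofam g eps k)) (snd (seqs Ofam g eps k)))) x).
    { unfold hf. destruct (Q (S k)) as [_ [E0 _]]. rewrite E0. reflexivity. }
    rewrite E in HH1. unfold ef in HH1. simpl in HH1.
    assert (Pe := proj2 (proj2 (Inv (S k))) x). simpl in Pe. lra.
  - exists H. split; [auto|split; [|split; [reflexivity|]]].
    + intros x. rewrite HH0. apply Hh0.
    + intros x. exists (eps x / 2). destruct Heps as [_ P]. specialize (P x).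
      split. lra. intros t s Ht Hs.
      assert (H1 := HHb x t Ht). assert (H2 := HHb x s Hs).
      unfold ef in H1, H2. simpl in H1, H2.
      eapply Rle_trans; [apply (dist_tri _ _ (hf O x 0))|].
      rewrite (dist_sym _ (hf O x 0) (H x s)). lra.
Qed.
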